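(* Let $M$ be an $n$-dimensional manifold and let $g(t)$, $t\in[0,T)$, be a solution of the Ricci flow $\partial_t g_{ij}=-2R_{ij}$ on $M$. Let $\xi=\xi_{i_1\dots i_p}(x,t)$ be a smooth family of $p$-forms (anti-symmetric covariant $p$-tensors) satisfying the heat equation $$\frac{\partial \xi_{i_1\dots i_p}}{\partial t}=\Delta_d\,\xi_{i_1\dots i_p},$$ where $\Delta_d$ is the Hodge–de Rham Laplacian of $g(t)$ in the form $$\Delta_d\,\xi_{i_1\dots i_p}=g^{jk}\xi_{i_1\dots i_p;j;k}-\sum_{s=1}^{p}\xi_{i_1\dots i_{s-1}a\,i_{s+1}\dots i_p}R^{a}_{\ i_s}-\sum_{1\le s<t\le p}\xi_{i_1\dots i_{s-1}a\,i_{s+1}\dots i_{t-1}b\,i_{t+1}\dots i_p}R^{ab}_{\ \ i_si_t}.$$ Then $$\frac{\partial}{\partial t}|\xi|^2=\Delta|\xi|^2-2\,\xi^{i_1\dots i_p;j}\xi_{i_1\dots i_p;j}-p(p-1)\,\xi_{ij i_1\dots i_{p-2}}R^{ij}_{\ \ kl}\,\xi^{kl i_1\dots i_{p-2}},$$ where $|\xi|^2=g^{i_1k_1}\cdots g^{i_pk_p}\xi_{i_1\dots i_p}\xi_{k_1\dots k_p}$ and $\Delta f=g^{ij}f_{;i;j}$ is the Laplacian of $g(t)$ on functions.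
   Context: All quantities are computed with respect to $g(t)$; indices are raised and lowered with $g(t)$, and ''$;j$'' denotes covariant differentiation. Curvature conventions: $R^{l}_{\ ijk}=\partial_i\Gamma^l_{jk}-\partial_j\Gamma^l_{ik}+\Gamma^l_{im}\Gamma^m_{jk}-\Gamma^l_{jm}\Gamma^m_{ik}$, $R_{ijkl}=g_{hl}R^{h}_{\ ijk}$, $R_{jk}=R^{i}_{\ ijk}$ (Ricci tensor), $R^{a}_{\ i}=g^{ab}R_{bi}$, and $R^{ij}_{\ \ kl}=g^{ia}g^{jb}R_{abkl}$. *)

(* Defs.v *)
(* Local-coordinate formalization of
   Ricci flow / p-forms on a coordinate chart U (open subset of R^n). *)
From HB Require Import structures.
From mathcomp Require Import all_boot all_order all_algebra.
From mathcomp Require Import all_classical all_reals all_analysis.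
From mathcomp Require Import fingroup perm.
Set Implicit Arguments. Unset Strict Implicit. Unset Printing Implicit Defensive.
Import Order.TTheory GRing.Theory Num.Theory.
Import numFieldNormedType.Exports.
Local Open Scope classical_set_scope.
Local Open Scope ring_scope.

Section RicciDefs.
Context {R : realType} {n : nat}.

Definition stfun := 'rV[R]_n -> R -> R.

Definition evec (i : 'I_n) : 'rV[R]_n := delta_mx 0 i.

Definition dx (f : stfun) (i : 'I_n) : stfun :=
  fun x t => 'D_(evec i) (fun y => f y t) x.
Definition dt (f : stfun) : stfun :=
  fun x t => 'D_1 (fun s : R => f x s) t.

Inductive pdop := PDx of 'I_n | PDt.
Fixpoint pds (os : seq pdop) (f : stfun) : stfun :=
  match os with
  | [::] => f
  | o :: os' => let h := pds os' f in
      match o with PDx i => dx h i | PDt => dt h end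
  end.
Definition smooth_on (U : set 'rV[R]_n) (T : R) (f : stfun) : Prop :=
  forall os x t, U x -> 0 < t < T ->
    [/\ forall i, derivable (fun y => pds os f y t) x (evec i),
        derivable (fun s : R => pds os f x s) t 1
      & {for (x, t), continuous (fun z : 'rV[R]_n * R => pds os f z.1 z.2)}].

Definition metric := 'I_n -> 'I_n -> stfun.
Definition gmx (g : metric) x t : 'M[R]_n := \matrix_(i, j) g i j x t.
Definition ginv (g : metric) (i j : 'I_n) : stfun :=
  fun x t => invmx (gmx g x t) i j.

Definition Chr (g : metric) (l j k : 'I_n) : stfun := fun x t =>
  2^-1 * \sum_(m < n) ginv g l m x t *
     (dx (g m k) j x t + dx (g m j) k x t - dx (g j k) m x t).

Definition Riem (g : metric) (l i j k : 'I_n) : stfun := fun x t =>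
  dx (Chr g l j k) i x t - dx (Chr g l i k) j x t
  + \sum_(m < n) (Chr g l i m x t * Chr g m j k x t
                  - Chr g l j m x t * Chr g m i k x t).
Definition Riem_low (g : metric) (i j k l : 'I_n) : stfun := fun x t =>
  \sum_(h < n) g h l x t * Riem g h i j k x t.
Definition Ric (g : metric) (j k : 'I_n) : stfun := fun x t =>
  \sum_(i < n) Riem g i i j k x t.
Definition Ric_up (g : metric) (a i : 'I_n) : stfun := fun x t =>
  \sum_(b < n) ginv g a b x t * Ric g b i x t.
Definition Riem_up (g : metric) (i j k l : 'I_n) : stfun := fun x t =>
  \sum_(a < n) \sum_(b < n) ginv g i a x t * ginv g j b x t * Riem_low g a b k l x t.

Definition tensor (m : nat) := {ffun 'I_m -> 'I_n} -> stfun.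

Definition upd m (I : {ffun 'I_m -> 'I_n}) (s : 'I_m) (a : 'I_n) :
  {ffun 'I_m -> 'I_n} := [ffun k => if k == s then a else I k].
Definition snoc m (I : {ffun 'I_m -> 'I_n}) (j : 'I_n) :
  {ffun 'I_m.+1 -> 'I_n} :=
  [ffun k => if unlift ord_max k is Some k' then I k' else j].
Definition init m (J : {ffun 'I_m.+1 -> 'I_n}) : {ffun 'I_m -> 'I_n} :=
  [ffun k => J (lift ord_max k)].

(* covariant derivative: (cov T)_{i_1..i_m j} = T_{i_1..i_m;j} *)
Definition cov (g : metric) m (T : tensor m) : tensor m.+1 := fun J x t =>
  dx (T (init J)) (J ord_max) x t
  - \sum_(s < m) \sum_(a < n)
      Chr g a (J ord_max) (init J s) x t * T (upd (init J) s a) x t.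

Definition inner (g : metric) m (A B : tensor m) : stfun := fun x t =>
  \sum_(J : {ffun 'I_m -> 'I_n}) \sum_(L : {ffun 'I_m -> 'I_n})
    (\prod_(s < m) ginv g (J s) (L s) x t) * A J x t * B L x t.

Definition norm2 (g : metric) p (xi : tensor p) : stfun := inner g xi xi.

Definition lap_fun (g : metric) (f : stfun) : stfun := fun x t =>
  \sum_(i < n) \sum_(j < n) ginv g i j x t *
    cov g (cov g ((fun _ => f) : tensor 0))
      (snoc (snoc [ffun k : 'I_0 => i] i) j) x t.

Definition hodge_lap (g : metric) p (xi : tensor p) : tensor p := fun I x t =>
  \sum_(j < n) \sum_(k < n) ginv g j k x t * cov g (cov g xi) (snoc (snoc I j) k) x t
  - \sum_(s < p) \sum_(a < n) xi (upd I s a) x t * Ric_up g a (I s) x t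
  - \sum_(s < p) \sum_(u < p | (s < u)%N) \sum_(a < n) \sum_(b < n)
       xi (upd (upd I s a) u b) x t * Riem_up g a b (I s) (I u) x t.

(* xi_{ij i_1..i_{p-2}} R^{ij}_{kl} xi^{kl i_1..i_{p-2}}  (0 if p < 2) *)
Definition curv_term (g : metric) p : tensor p -> stfun :=
  match p as p' return tensor p' -> stfun with
  | q.+2 => fun xi x t =>
      \sum_(J : {ffun 'I_q.+2 -> 'I_n}) \sum_(L : {ffun 'I_q.+2 -> 'I_n})
      \sum_(k < n) \sum_(l < n)
        xi J x t * Riem_up g (J ord0) (J (lift ord0 ord0)) k l x t
        * ginv g k (L ord0) x t * ginv g l (L (lift ord0 ord0)) x t
        * (\prod_(s < q) ginv g (J (lift ord0 (lift ord0 s)))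
                                (L (lift ord0 (lift ord0 s))) x t)
        * xi L x t
  | _ => fun _ _ _ => 0
  end.

Definition antisym p (xi : tensor p) : Prop :=
  forall (I : {ffun 'I_p -> 'I_n}) (s u : 'I_p), s != u ->
    forall x t, xi [ffun k => I (tperm s u k)] x t = - xi I x t.

End RicciDefs.

(* Main.v *)
Require Import Defs.
From HB Require Import structures.
From mathcomp Require Import all_boot all_order all_algebra.
From mathcomp Require Import all_classical all_reals all_analysis.
From mathcomp Require Import fingroup perm.
From mathcomp Require Import ring.
Import Order.TTheory GRing.Theory Num.Theory.
Import numFieldNormedType.Exports.
Local Open Scope classical_set_scope.
Local Open Scope ring_scope.
Section GenDer.
Context {R : realType} {V : normedModType R}.
Implicit Types (f h : V -> R) (z v : V).

Lemma dvM f h z v : derivable f z v -> derivable h z v ->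
  derivable (fun y => f y * h y) z v.
Proof. move=> ??; exact: derivableM. Qed.

Lemma DvM f h z v : derivable f z v -> derivable h z v ->
  'D_v (fun y => f y * h y) z = f z * 'D_v h z + h z * 'D_v f z.
Proof. move=> ??; exact: deriveM. Qed.

Lemma dvD f h z v : derivable f z v -> derivable h z v ->
  derivable (fun y => f y + h y) z v.
Proof. move=> ??; exact: derivableD. Qed.

Lemma DvD f h z v : derivable f z v -> derivable h z v ->
  'D_v (fun y => f y + h y) z = 'D_v f z + 'D_v h z.
Proof. move=> ??; exact: deriveD. Qed.

Lemma dvB f h z v : derivable f z v -> derivable h z v ->
  derivable (fun y => f y - h y) z v.
Proof. move=> ??; exact: derivableB. Qed.

Lemma DvB f h z v : derivable f z v -> derivable h z v ->
  'D_v (fun y => f y - h y) z = 'D_v f z - 'D_v h z.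
Proof. move=> ??; exact: deriveB. Qed.

Lemma dvC (c : R) z v : derivable (fun _ : V => c) z v.
Proof. exact: derivable_cst. Qed.

Lemma DvC (c : R) z v : 'D_v (fun _ : V => c) z = 0.
Proof. exact: derive_cst. Qed.

Lemma dvV f z v : f z != 0 -> derivable f z v -> derivable (fun y => (f y)^-1) z v.
Proof. move=> ??; exact: derivableV. Qed.

Lemma dv_sum (I : Type) (r : seq I) (P : pred I) (F : I -> V -> R) z v :
  (forall i, P i -> derivable (F i) z v) ->
  derivable (fun y => \sum_(i <- r | P i) F i y) z v /\
  'D_v (fun y => \sum_(i <- r | P i) F i y) z = \sum_(i <- r | P i) 'D_v (F i) z.
Proof.
move=> H; elim: r => [|a r [IH1 IH2]].
  have -> : (fun y => \sum_(i <- [::] | P i) F i y) = (fun _ => 0).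
    by apply/funext => y; rewrite big_nil.
  by rewrite big_nil; split; [exact: dvC|exact: DvC].
case Pa: (P a).
  have -> : (fun y => \sum_(i <- a :: r | P i) F i y) =
            (fun y => F a y + \sum_(i <- r | P i) F i y).
    by apply/funext => y; rewrite big_cons Pa.
  rewrite big_cons Pa; split; first exact: dvD (H _ Pa) IH1.
  by rewrite DvD // ?IH2 //; exact: H.
have -> : (fun y => \sum_(i <- a :: r | P i) F i y) =
          (fun y => \sum_(i <- r | P i) F i y).
  by apply/funext => y; rewrite big_cons Pa.
by rewrite big_cons Pa.
Qed.

Lemma dv_sumd (I : Type) (r : seq I) (P : pred I) (F : I -> V -> R) z v :
  (forall i, P i -> derivable (F i) z v) ->
  derivable (fun y => \sum_(i <- r | P i) F i y) z v.
Proof. by move=> /dv_sum-/(_ r) []. Qed.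

Lemma Dv_sum (I : Type) (r : seq I) (P : pred I) (F : I -> V -> R) z v :
  (forall i, P i -> derivable (F i) z v) ->
  'D_v (fun y => \sum_(i <- r | P i) F i y) z = \sum_(i <- r | P i) 'D_v (F i) z.
Proof. by move=> /dv_sum-/(_ r) []. Qed.

Lemma dv_prod (I : Type) (r : seq I) (P : pred I) (F : I -> V -> R) z v :
  (forall i, P i -> derivable (F i) z v) ->
  derivable (fun y => \prod_(i <- r | P i) F i y) z v.
Proof.
move=> H; elim: r => [|a r IH].
  have -> : (fun y => \prod_(i <- [::] | P i) F i y) = (fun _ => 1).
    by apply/funext => y; rewrite big_nil.
  exact: dvC.
case Pa: (P a).
  have -> : (fun y => \prod_(i <- a :: r | P i) F i y) =
            (fun y => F a y * \prod_(i <- r | P i) F i y).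
    by apply/funext => y; rewrite big_cons Pa.
  exact: dvM (H _ Pa) IH.
have -> : (fun y => \prod_(i <- a :: r | P i) F i y) =
          (fun y => \prod_(i <- r | P i) F i y).
  by apply/funext => y; rewrite big_cons Pa.
exact: IH.
Qed.

Lemma Dv_prod (I : eqType) (r : seq I) (F : I -> V -> R) z v :
  uniq r -> (forall i, derivable (F i) z v) ->
  'D_v (fun y => \prod_(i <- r) F i y) z =
  \sum_(i <- r) 'D_v (F i) z * \prod_(j <- r | j != i) F j z.
Proof.
move=> + H; elim: r => [|a r IH] /=.
  have -> : (fun y => \prod_(i <- [::]) F i y) = (fun _ => 1).
    by apply/funext => y; rewrite big_nil.
  by rewrite DvC big_nil.
move=> /andP[anr ur].
have -> : (fun y => \prod_(i <- a :: r) F i y) =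
          (fun y => F a y * \prod_(i <- r) F i y).
  by apply/funext => y; rewrite big_cons.
rewrite DvM //; last by apply: dv_prod => i _; exact: H.
rewrite IH // [in RHS]big_cons [X in _ = _ * X + _]big_cons eqxx /= mulr_sumr.
have -> : \prod_(j <- r | j != a) F j z = \prod_(j <- r) F j z.
  rewrite big_seq_cond [RHS]big_seq_cond; apply: eq_bigl => j.
  by case jr: (j \in r) => //=; apply/negP => /eqP ja; move: anr; rewrite -ja jr.
rewrite addrC; congr (_ + _); first by rewrite mulrC.
rewrite [LHS]big_seq [RHS]big_seq; apply: eq_bigr => i ir.
rewrite big_cons; case: eqP => [ai|_]; first by move: anr; rewrite ai ir.
by rewrite mulrCA.
Qed.

End GenDer.
Section InvDer.
Context {R : realType} {V : normedModType R} {n : nat}.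
Variables (M : V -> 'M[R]_n) (z v : V).
Hypothesis dM : forall i j, derivable (fun y => M y i j) z v.
Hypothesis uM : \forall y \near z, M y \in unitmx.

Lemma dv_det : derivable (fun y => \det (M y)) z v.
Proof.
apply: dv_sumd => s _; apply: dvM; first exact: dvC.
by apply: dv_prod => i _.
Qed.

Lemma dv_adj i j : derivable (fun y => \adj (M y) i j) z v.
Proof.
have -> : (fun y => \adj (M y) i j) = (fun y => \sum_(s : 'S_n | s j == i)
    (-1) ^+ s * \prod_(k | j != k) M y k (s k)).
  by apply/funext => y; rewrite mxE expand_cofactor.
apply: dv_sumd => s _; apply: dvM; first exact: dvC.
by apply: dv_prod => k _.
Qed.

Lemma unit_z : M z \in unitmx.
Proof. exact: (nbhs_singleton uM). Qed.

Lemma dv_inv i j : derivable (fun y => invmx (M y) i j) z v.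
Proof.
apply: (@near_eq_derivable _ _ _ (fun y => (\det (M y))^-1 * \adj (M y) i j)).
  suff H : \forall y \near z,
      (\det (M y))^-1 * \adj (M y) i j = invmx (M y) i j by [].
  apply: filterS uM => y Hu; rewrite /invmx Hu.
  by rewrite [RHS]mxE.
apply: (@dvM _ _ (fun y => (\det (M y))^-1)); last exact: dv_adj.
apply: (@dvV _ _ (fun y => \det (M y))); last exact: dv_det.
by have := unit_z; rewrite unitmxE unitfE.
Qed.

Lemma Dv_inv i j : 'D_v (fun y => invmx (M y) i j) z =
  - \sum_a \sum_b invmx (M z) i a * 'D_v (fun y => M y a b) z * invmx (M z) b j.
Proof.
set Mi := invmx (M z).
pose DM := \matrix_(a, b) 'D_v (fun y => M y a b) z.
pose DI := \matrix_(a, b) 'D_v (fun y => invmx (M y) a b) z.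
have key : M z *m DI = - (DM *m Mi).
  apply/matrixP => a b; rewrite !mxE.
  have E : 'D_v (fun y => \sum_m M y a m * invmx (M y) m b) z = 0.
    rewrite (@near_eq_derive _ _ _ _ (fun _ => (1%:M : 'M[R]_n) a b)); first exact: DvC.
    apply: filterS uM => y Hu.
    move/matrixP: (mulmxV Hu) => /(_ a b); rewrite mxE => H; exact: H.
  move: E; rewrite (Dv_sum _ _ _ (fun m y => M y a m * invmx (M y) m b)); last first.
    by move=> m _; apply: dvM => //; exact: dv_inv.
  rewrite (eq_bigr (fun m => M z a m * DI m b + DM a m * Mi m b)); last first.
    move=> m _; rewrite DvM //; last exact: dv_inv.
    by rewrite /DI /DM /Mi !mxE; ring.
  rewrite big_split /= => /eqP; rewrite addr_eq0 => /eqP ->.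
  by rewrite -sumrN; apply: eq_bigr => m _; rewrite !mxE.
have : DI = - (Mi *m DM *m Mi).
  by rewrite -mulmxA -mulmxN -key mulKmx //; exact: unit_z.
move/matrixP/(_ i j); rewrite !mxE => ->; congr (- _).
rewrite (exchange_big) /=; apply: eq_bigr => b _; rewrite !mxE mulr_suml.
by apply: eq_bigr => a _; rewrite !mxE.
Qed.

End InvDer.
Section Alg.
Context {R : realType} {n : nat}.
Local Notation FF m := {ffun 'I_m -> 'I_n}.

Lemma upd_at {m} (J : FF m) s a : upd J s a s = a.
Proof. by rewrite /upd ffunE eqxx. Qed.

Lemma upd_ne {m} (J : FF m) s a r : r != s -> upd J s a r = J r.
Proof. by move=> rs; rewrite /upd ffunE (negbTE rs). Qed.

Lemma upd_id {m} (J : FF m) s : upd J s (J s) = J.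
Proof. by apply/ffunP => r; rewrite /upd ffunE; case: eqP => // ->. Qed.

Lemma upd_upd {m} (J : FF m) s a b : upd (upd J s a) s b = upd J s b.
Proof. by apply/ffunP => r; rewrite /upd !ffunE; case: eqP. Qed.

Lemma reindex_upd {m} (s : 'I_m) (Phi : FF m -> 'I_n -> R) :
  \sum_(J : FF m) \sum_(c : 'I_n) Phi (upd J s c) (J s) = \sum_(J : FF m) \sum_(a : 'I_n) Phi J a.
Proof.
rewrite !pair_bigA /=.
pose h := fun p : FF m * 'I_n => (upd p.1 s p.2, p.1 s).
have hK : involutive h.
  by case=> J c; rewrite /h /= upd_upd upd_id upd_at.
rewrite [RHS](reindex h) /=; last by apply: onW_bij; exact: inv_bij.
by [].
Qed.

Lemma reindex_upd' {m} (s : 'I_m) (F : FF m -> 'I_n -> R) (Phi : FF m -> 'I_n -> R) :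
  (forall J c, F J c = Phi (upd J s c) (J s)) ->
  \sum_(J : FF m) \sum_(c : 'I_n) F J c = \sum_(J : FF m) \sum_(a : 'I_n) Phi J a.
Proof.
move=> H; rewrite -(reindex_upd s Phi); apply: eq_bigr => J _; apply: eq_bigr => c _.
exact: H.
Qed.

Definition inn {m} (G : 'I_n -> 'I_n -> R) (A B : FF m -> R) : R :=
  \sum_(J : FF m) \sum_(L : FF m) (\prod_(s < m) G (J s) (L s)) * A J * B L.

Definition mterm {m} (G dG : 'I_n -> 'I_n -> R) (J L : FF m) : R :=
  \sum_(s < m) dG (J s) (L s) * \prod_(r < m | r != s) G (J r) (L r).

Definition MT {m} (G dG : 'I_n -> 'I_n -> R) (A B : FF m -> R) : R :=
  \sum_(J : FF m) \sum_(L : FF m) mterm G dG J L * A J * B L.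

Lemma inn_ext {m} G (A A' B B' : FF m -> R) :
  (forall J, A J = A' J) -> (forall L, B L = B' L) -> inn G A B = inn G A' B'.
Proof.
move=> HA HB; apply: eq_bigr => J _; apply: eq_bigr => L _; by rewrite HA HB.
Qed.

Lemma inn_swap {m} G (A B : FF m -> R) :
  inn G A B = inn (fun a b => G b a) B A.
Proof.
rewrite /inn exchange_big; apply: eq_bigr => L _; apply: eq_bigr => J _.
by rewrite mulrAC.
Qed.

Lemma innC {m} G (A B : FF m -> R) : (forall a b, G a b = G b a) ->
  inn G A B = inn G B A.
Proof.
move=> HG; rewrite inn_swap /inn; apply: eq_bigr => J _; apply: eq_bigr => L _.
by congr (_ * _ * _); apply: eq_bigr => s _; rewrite HG.
Qed.

Lemma MT_swap {m} G dG (A B : FF m -> R) :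
  MT G dG A B = MT (fun a b => G b a) (fun a b => dG b a) B A.
Proof.
rewrite /MT exchange_big; apply: eq_bigr => L _; apply: eq_bigr => J _.
by rewrite mulrAC.
Qed.

Lemma MT_ext {m} G dG dG' (A B : FF m -> R) :
  (forall a b, dG a b = dG' a b) -> MT G dG A B = MT G dG' A B.
Proof.
move=> H; apply: eq_bigr => J _; apply: eq_bigr => L _; congr (_ * _ * _).
by apply: eq_bigr => s _; rewrite H.
Qed.

Lemma MT_lin {m} G dG d1 d2 (c1 c2 : R) (A B : FF m -> R) :
  (forall a b, dG a b = c1 * d1 a b + c2 * d2 a b) ->
  MT G dG A B = c1 * MT G d1 A B + c2 * MT G d2 A B.
Proof.
move=> H; rewrite /MT !mulr_sumr -big_split; apply: eq_bigr => J _.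
rewrite !mulr_sumr -big_split; apply: eq_bigr => L _.
rewrite /mterm !mulr_suml !mulr_sumr -big_split; apply: eq_bigr => s _.
rewrite /= H; ring.
Qed.

Lemma inn_sumA {m} G (I : Type) (r : seq I) (P : pred I) (F : I -> FF m -> R)
   (B : FF m -> R) :
  inn G (fun J => \sum_(i <- r | P i) F i J) B = \sum_(i <- r | P i) inn G (F i) B.
Proof.
rewrite /inn; under eq_bigr => J _ do under eq_bigr => L _ do
  rewrite mulr_sumr mulr_suml.
under eq_bigr => J _ do rewrite exchange_big.
by rewrite exchange_big.
Qed.

Lemma innDl {m} G (A1 A2 B : FF m -> R) :
  inn G (fun J => A1 J + A2 J) B = inn G A1 B + inn G A2 B.
Proof.
rewrite /inn -big_split; apply: eq_bigr => J _; rewrite -big_split.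
by apply: eq_bigr => L _ /=; ring.
Qed.

Lemma innBl {m} G (A1 A2 B : FF m -> R) :
  inn G (fun J => A1 J - A2 J) B = inn G A1 B - inn G A2 B.
Proof.
rewrite /inn -sumrB; apply: eq_bigr => J _; rewrite -sumrB.
by apply: eq_bigr => L _ /=; ring.
Qed.

Lemma innZl {m} G (c : R) (A B : FF m -> R) :
  inn G (fun J => c * A J) B = c * inn G A B.
Proof.
rewrite /inn mulr_sumr; apply: eq_bigr => J _; rewrite mulr_sumr.
by apply: eq_bigr => L _ /=; ring.
Qed.

Lemma prod_split {m} (G : 'I_n -> 'I_n -> R) (J L : FF m) s :
  \prod_(r < m) G (J r) (L r) = G (J s) (L s) * \prod_(r < m | r != s) G (J r) (L r).
Proof. by rewrite (bigD1 s). Qed.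

Lemma prod_upd {m} (G : 'I_n -> 'I_n -> R) (J L : FF m) s a :
  \prod_(r < m | r != s) G (upd J s a r) (L r) = \prod_(r < m | r != s) G (J r) (L r).
Proof. by apply: eq_bigr => r rs; rewrite upd_ne. Qed.

Lemma contract_l1 {m} G (K : 'I_n -> 'I_n -> R) (A B : FF m -> R) (s : 'I_m) :
  inn G (fun J => \sum_(c : 'I_n) K (J s) c * A (upd J s c)) B =
  \sum_(J : FF m) \sum_(L : FF m) (\sum_(c : 'I_n) G c (L s) * K c (J s)) *
      \prod_(r | r != s) G (J r) (L r) * A J * B L.
Proof.
rewrite /inn exchange_big [RHS]exchange_big; apply: eq_bigr => L _.
under eq_bigr => J _ do rewrite mulr_sumr mulr_suml.
rewrite (@reindex_upd' m s _ (fun J a => G a (L s) * K a (J s) *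
   \prod_(r | r != s) G (J r) (L r) * A J * B L)).
  by apply: eq_bigr => J _; rewrite !mulr_suml; apply: eq_bigr => a _.
move=> J c; rewrite upd_at prod_upd (prod_split _ _ _ s); ring.
Qed.


Lemma MT_sum {m} G dG (A B : FF m -> R) : MT G dG A B =
  \sum_(s < m) \sum_(J : FF m) \sum_(L : FF m)
     dG (J s) (L s) * \prod_(r < m | r != s) G (J r) (L r) * A J * B L.
Proof.
rewrite /MT /mterm [RHS]exchange_big; apply: eq_bigr => J _.
rewrite [RHS]exchange_big; apply: eq_bigr => L _.
by rewrite !mulr_suml.
Qed.

Lemma contract_l {m} G (K : 'I_n -> 'I_n -> R) (A B : FF m -> R) :
  inn G (fun J => \sum_(s < m) \sum_(c : 'I_n) K (J s) c * A (upd J s c)) B =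
  MT G (fun a b => \sum_(c : 'I_n) G c b * K c a) A B.
Proof.
rewrite inn_sumA MT_sum; apply: eq_bigr => s _; rewrite contract_l1.
apply: eq_bigr => J _; apply: eq_bigr => L _; by rewrite mulr_suml.
Qed.

Lemma contract_r {m} G (K : 'I_n -> 'I_n -> R) (A B : FF m -> R) :
  inn G A (fun L => \sum_(s < m) \sum_(c : 'I_n) K (L s) c * B (upd L s c)) =
  MT G (fun a b => \sum_(c : 'I_n) G a c * K c b) A B.
Proof. by rewrite inn_swap contract_l MT_swap. Qed.

Lemma snoc_max {m} (J : FF m) j : snoc J j ord_max = j.
Proof. by rewrite /snoc ffunE unlift_none. Qed.

Lemma snoc_lift {m} (J : FF m) j k : snoc J j (lift ord_max k) = J k.
Proof. by rewrite /snoc ffunE liftK. Qed.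

Lemma init_snoc {m} (J : FF m) j : init (snoc J j) = J.
Proof. by apply/ffunP => k; rewrite /init ffunE snoc_lift. Qed.

Lemma snoc_init {m} (J : FF m.+1) : snoc (init J) (J ord_max) = J.
Proof.
apply/ffunP => k; rewrite /snoc ffunE; case: unliftP => [k' ->|->] //.
by rewrite /init ffunE.
Qed.

Lemma upd_snoc_lift {m} (J : FF m) j s a :
  upd (snoc J j) (lift ord_max s) a = snoc (upd J s a) j.
Proof.
apply/ffunP => k; rewrite /upd /snoc !ffunE; case: unliftP => [k' ->|->].
  rewrite (inj_eq (@lift_inj _ _)); exact: (esym (ffunE _ _)).
by rewrite (negbTE (neq_lift _ _)).
Qed.

Lemma upd_snoc_max {m} (J : FF m) j a :
  upd (snoc J j) ord_max a = snoc J a.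
Proof.
apply/ffunP => k; rewrite /upd /snoc !ffunE; case: unliftP => [k' ->|->].
  by rewrite eq_sym (negbTE (neq_lift _ _)).
by rewrite eqxx.
Qed.

Lemma sum_snoc {m} (F : FF m.+1 -> R) :
  \sum_(J : FF m.+1) F J = \sum_(J : FF m) \sum_(i : 'I_n) F (snoc J i).
Proof.
rewrite pair_bigA /=.
rewrite (reindex (fun p : FF m * 'I_n => snoc p.1 p.2)) //=.
exists (fun J => (init J, J ord_max)) => [[J i] _|J _] /=.
  by rewrite init_snoc snoc_max.
exact: snoc_init.
Qed.

Lemma snoc_widen {m} (J : FF m) j r : snoc J j (widen_ord (leqnSn m) r) = J r.
Proof.
rewrite /snoc ffunE; case: unliftP => [k' E|E].
  congr (J _); apply/val_inj; move/(congr1 val): E => /= ->.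
  rewrite /bump; have -> : (m <= k')%N = false.
    by apply/negbTE; rewrite -ltnNge; exact: (ltn_ord k').
  by [].
by move/(congr1 val): E => /= Erm; move: (ltn_ord r); rewrite Erm ltnn.
Qed.

Lemma prod_snoc {m} (G : 'I_n -> 'I_n -> R) (J L : FF m) i j :
  \prod_(r < m.+1) G (snoc J i r) (snoc L j r) =
  (\prod_(r < m) G (J r) (L r)) * G i j.
Proof.
rewrite big_ord_recr /= !snoc_max; congr (_ * _); apply: eq_bigr => r _.
by rewrite !snoc_widen.
Qed.

Lemma inn_split {m} G (A B : FF m.+1 -> R) :
  inn G A B = \sum_i \sum_j G i j *
     inn G (fun J => A (snoc J i)) (fun L => B (snoc L j)).
Proof.
rewrite /inn sum_snoc.
transitivity (\sum_(J : FF m) \sum_i \sum_(L : FF m) \sum_j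
   (\prod_(r < m) G (J r) (L r)) * G i j * A (snoc J i) * B (snoc L j)).
  apply: eq_bigr => J _; apply: eq_bigr => i _; rewrite sum_snoc.
  apply: eq_bigr => L _; apply: eq_bigr => j _; by rewrite prod_snoc.
rewrite exchange_big; apply: eq_bigr => i _.
transitivity (\sum_(J : FF m) \sum_j \sum_(L : FF m)
   (\prod_(r < m) G (J r) (L r)) * G i j * A (snoc J i) * B (snoc L j)).
  by apply: eq_bigr => J _; rewrite exchange_big.
rewrite exchange_big; apply: eq_bigr => j _; rewrite /= mulr_sumr.
apply: eq_bigr => J _; rewrite mulr_sumr; apply: eq_bigr => L _; ring.
Qed.

End Alg.
Section DInner.
Context {R : realType} {V : normedModType R} {n m : nat}.
Variables (Gf : 'I_n -> 'I_n -> V -> R) (A B : {ffun 'I_m -> 'I_n} -> V -> R) (z v : V).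
Hypothesis dG : forall a b, derivable (Gf a b) z v.
Hypothesis dA : forall J, derivable (A J) z v.
Hypothesis dB : forall L, derivable (B L) z v.

Let P (J L : {ffun 'I_m -> 'I_n}) := fun y => \prod_(s < m) Gf (J s) (L s) y.

Lemma dP J L : derivable (P J L) z v.
Proof. by apply: dv_prod => s _. Qed.

Lemma DP J L : 'D_v (P J L) z = mterm (fun a b => Gf a b z) (fun a b => 'D_v (Gf a b) z) J L.
Proof. by rewrite /P Dv_prod //; exact: index_enum_uniq. Qed.

Lemma dterm J L : derivable (fun y => P J L y * A J y * B L y) z v.
Proof. by apply: dvM; [apply: dvM; [exact: dP|exact: dA]|exact: dB]. Qed.

Lemma D_inner :
  derivable (fun y => inn (fun a b => Gf a b y) (fun J => A J y) (fun L => B L y)) z v /\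
  'D_v (fun y => inn (fun a b => Gf a b y) (fun J => A J y) (fun L => B L y)) z =
  MT (fun a b => Gf a b z) (fun a b => 'D_v (Gf a b) z) (fun J => A J z) (fun L => B L z)
  + inn (fun a b => Gf a b z) (fun J => 'D_v (A J) z) (fun L => B L z)
  + inn (fun a b => Gf a b z) (fun J => A J z) (fun L => 'D_v (B L) z).
Proof.
rewrite /inn; split.
  apply: (dv_sumd _ _ _ (fun J y => \sum_L P J L y * A J y * B L y)) => J _.
  apply: (dv_sumd _ _ _ (fun L y => P J L y * A J y * B L y)) => L _.
  exact: dterm.
rewrite (Dv_sum _ _ _ (fun J y => \sum_L P J L y * A J y * B L y)); last first.
  move=> J _; apply: (dv_sumd _ _ _ (fun L y => P J L y * A J y * B L y)) => L _.
  exact: dterm.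
rewrite /MT -!big_split; apply: eq_bigr => J _ /=.
rewrite (Dv_sum _ _ _ (fun L y => P J L y * A J y * B L y)); last first.
  by move=> L _; exact: dterm.
rewrite -!big_split; apply: eq_bigr => L _ /=.
rewrite (DvM (fun y => P J L y * A J y)); [|apply: dvM; [exact: dP|exact: dA]|exact: dB].
rewrite (DvM (P J L)) ?DP; [|exact: dP|exact: dA].
rewrite /P; ring.
Qed.

End DInner.
Section Alg2.
Context {R : realType} {n : nat}.
Local Notation FF m := {ffun 'I_m -> 'I_n}.

Definition Tsu {m} (G : 'I_n -> 'I_n -> R) (Rq : 'I_n -> 'I_n -> 'I_n -> 'I_n -> R)
  (X : FF m -> R) (s u : 'I_m) : R :=
  \sum_(J : FF m) \sum_(L : FF m) \sum_(c : 'I_n) \sum_(d : 'I_n)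
    X J * Rq (J s) (J u) c d * G c (L s) * G d (L u) *
    (\prod_(r < m | (r != s) && (r != u)) G (J r) (L r)) * X L.

Lemma prod_split2 {m} (G : 'I_n -> 'I_n -> R) (J L : FF m) (s u : 'I_m) : u != s ->
  \prod_(r < m | r != s) G (J r) (L r) =
  G (J u) (L u) * \prod_(r < m | (r != s) && (r != u)) G (J r) (L r).
Proof. by move=> us; rewrite (bigD1 u) //=. Qed.

Lemma pair_term {m} G Rq (X : FF m -> R) (s u : 'I_m) : s != u ->
  inn G (fun J => \sum_a \sum_b X (upd (upd J s a) u b) * Rq a b (J s) (J u)) X =
  Tsu G Rq X s u.
Proof.
move=> su; have us : u != s by rewrite eq_sym.
rewrite /inn /Tsu exchange_big [RHS]exchange_big; apply: eq_bigr => L _.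
transitivity (\sum_(J : FF m) \sum_a \sum_b
   (\prod_(r < m) G (J r) (L r)) * (X (upd (upd J s a) u b) * Rq a b (J s) (J u)) * X L).
  apply: eq_bigr => J _; rewrite mulr_sumr mulr_suml; apply: eq_bigr => a _.
  by rewrite mulr_sumr mulr_suml.
rewrite (@reindex_upd' R n m s _ (fun K c => \sum_b G c (L s) *
   (\prod_(r < m | r != s) G (K r) (L r)) * X (upd K u b) * Rq (K s) b c (K u) * X L));
  last first.
  move=> J a; rewrite upd_at (upd_ne _ _ _ _ us).
  apply: eq_bigr => b _; rewrite prod_upd (prod_split _ _ _ s); ring.
rewrite exchange_big /=.
transitivity (\sum_c \sum_(K : FF m) \sum_d G c (L s) * G d (L u) *
   (\prod_(r < m | (r != s) && (r != u)) G (K r) (L r)) * X K * Rq (K s) (K u) c d * X L).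
  apply: eq_bigr => c _.
  rewrite (@reindex_upd' R n m u _ (fun K d => G c (L s) * G d (L u) *
     (\prod_(r < m | (r != s) && (r != u)) G (K r) (L r)) * X K *
     Rq (K s) (K u) c d * X L)) //.
  move=> K b; rewrite upd_at (upd_ne _ _ _ _ su) (prod_split2 _ _ _ _ _ us).
  have -> : \prod_(r < m | (r != s) && (r != u)) G (upd K u b r) (L r) =
            \prod_(r < m | (r != s) && (r != u)) G (K r) (L r).
    by apply: eq_bigr => r /andP[_ ru]; rewrite upd_ne.
  ring.
rewrite exchange_big; apply: eq_bigr => J _; apply: eq_bigr => c _.
by apply: eq_bigr => d _; ring.
Qed.

End Alg2.

Section Alg3.
Context {R : realType} {n : nat}.
Local Notation FF m := {ffun 'I_m -> 'I_n}.

Definition ffp {m} (J : FF m) (tau : 'S_m) : FF m := [ffun k => J (tau k)].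

Lemma Tsu_perm {m} G Rq (X : FF m -> R) (a b s u : 'I_m) :
  (forall J, a != b -> X (ffp J (tperm a b)) = - X J) ->
  Tsu G Rq X s u = Tsu G Rq X (tperm a b s) (tperm a b u).
Proof.
move=> anti; set tau := tperm a b.
have tK : forall k, tau (tau k) = k by move=> k; rewrite /tau tpermK.
have inv : involutive (fun J : FF m => ffp J tau).
  by move=> J; apply/ffunP => k; rewrite !ffunE tK.
have XX : forall J L, X (ffp J tau) * X (ffp L tau) = X J * X L.
  move=> J L; case: (eqVneq a b) => [ab|ab].
    have E : forall K : FF m, ffp K tau = K.
      by move=> K; apply/ffunP => k; rewrite ffunE /tau ab tperm1 perm1.
    by rewrite !E.
  by rewrite !anti //; ring.
rewrite /Tsu [RHS](reindex (fun J : FF m => ffp J tau)) /=; last first.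
  by apply: onW_bij; exact: inv_bij.
apply: eq_bigr => J _.
rewrite [RHS](reindex (fun J : FF m => ffp J tau)) /=; last first.
  by apply: onW_bij; exact: inv_bij.
apply: eq_bigr => L _; apply: eq_bigr => c _; apply: eq_bigr => d _.
rewrite !ffunE !tK.
have -> : \prod_(r < m | (r != tau s) && (r != tau u)) G (ffp J tau r) (ffp L tau r)
        = \prod_(r < m | (r != s) && (r != u)) G (J r) (L r).
  rewrite [RHS](reindex_inj (@perm_inj _ tau)) /=; apply: eq_big => r.
    by rewrite !(canF_eq tK).
  by rewrite !ffunE.
set P := \prod_(r < m | _) _.
transitivity (X J * X L * (Rq (J s) (J u) c d * G c (L s) * G d (L u) * P)); first by ring.
by rewrite -XX; ring.
Qed.


Lemma Tsu_01 {q} G Rq (X : FF q.+2 -> R) :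
  (forall J a b, a != b -> X (ffp J (tperm a b)) = - X J) ->
  forall s u : 'I_q.+2, s != u -> Tsu G Rq X s u = Tsu G Rq X ord0 (lift ord0 ord0).
Proof.
move=> anti s u su.
have tK : forall (x y : 'I_q.+2), cancel (tperm x y) (tperm x y).
  by move=> x y k; rewrite tpermK.
rewrite (@Tsu_perm _ G Rq X s ord0 s u (fun J => anti J s ord0)) tpermL.
set v := tperm s ord0 u.
have v0 : v != ord0.
  by rewrite /v (canF_eq (tK _ _)) tpermR eq_sym.
have o01 : (ord0 : 'I_q.+2) != lift ord0 ord0 by exact: neq_lift.
rewrite (@Tsu_perm _ G Rq X v (lift ord0 ord0) ord0 v (fun J => anti J v _)) tpermL.
by rewrite tpermD // eq_sym.
Qed.

Lemma prod_curv {q} (F : 'I_q.+2 -> R) :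
  \prod_(r < q.+2 | (r != ord0) && (r != lift ord0 ord0)) F r =
  \prod_(s < q) F (lift ord0 (lift ord0 s)).
Proof.
by rewrite big_mkcond big_ord_recl /= mul1r big_ord_recl /= mul1r.
Qed.

Lemma pairs_count (p : nat) :
  2 * \sum_(s < p) \sum_(u < p | (s < u)%N) (1 : R) = (p * (p - 1))%:R.
Proof.
set X := \sum_(s < p) \sum_(u < p | (s < u)%N) (1 : R).
have HY : \sum_(s < p) \sum_(u < p | (u < s)%N) (1 : R) = X.
  rewrite /X; under eq_bigr => s _ do rewrite big_mkcond.
  rewrite exchange_big; apply: eq_bigr => u _.
  by rewrite [RHS]big_mkcond.
have HT : \sum_(s < p) \sum_(u < p) (1 : R) =
    X + \sum_(s < p) \sum_(u < p | (u < s)%N) (1 : R) + \sum_(s < p) (1 : R).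
  rewrite /X -!big_split; apply: eq_bigr => s _ /=.
  rewrite (bigID (fun u : 'I_p => (s < u)%N)) /= -addrA; congr (_ + _).
  rewrite (bigID (fun u : 'I_p => (u < s)%N)) /=; congr (_ + _).
    by apply: eq_bigl => u; case: ltngtP.
  rewrite (big_pred1 s) // => u /=; rewrite -[u == s]/(val u == val s).
  by case: ltngtP.
move: HT; rewrite HY !sumr_const !card_ord => HT.
have Hn : (p * (p - 1) + p = p * p)%N.
  by case: p {X HY HT} => // p; rewrite subSS subn0 -mulnSr.
apply: (@addIr _ (p%:R)); rewrite -natrD Hn natrM [RHS]mulr_natr HT; ring.
Qed.

End Alg3.
Section Geo.
Context {R : realType} {n : nat} (U : set 'rV[R]_n) (T : R) (g : @metric R n).
Hypothesis oU : open U.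
Hypothesis gs : forall i j, smooth_on U T (g i j).
Hypothesis gsym : forall i j x t, U x -> 0 < t < T -> g i j x t = g j i x t.
Hypothesis gpos : forall x t, U x -> 0 < t < T ->
     forall v : 'rV[R]_n, v != 0 -> 0 < (v *m gmx g x t *m v^T) 0 0.

Lemma smooth_dx os {f : stfun} {x t} : smooth_on U T f -> U x -> 0 < t < T ->
  forall k, derivable (fun y => pds os f y t) x (evec k).
Proof. by move=> sf Ux Ht; case: (sf os x t Ux Ht). Qed.

Lemma smooth_dt os {f : stfun} {x t} : smooth_on U T f -> U x -> 0 < t < T ->
  derivable (fun s => pds os f x s) t 1.
Proof. by move=> sf Ux Ht; case: (sf os x t Ux Ht). Qed.

Lemma g_unit {x t} : U x -> 0 < t < T -> gmx g x t \in unitmx.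
Proof.
move=> Ux Ht; rewrite unitmxE unitfE; apply/negP => /det0P [v v0 vM].
by have := gpos x t Ux Ht v v0; rewrite vM mul0mx mxE ltxx.
Qed.

Lemma near_U {x} : U x -> \forall y \near x, U y.
Proof. by move=> Ux; exact: oU. Qed.

Lemma near_T {t} : 0 < t < T -> \forall s \near t, 0 < s < T.
Proof.
case/andP => t0 tT; near=> s; apply/andP; split; near: s.
  exact: lt_nbhsr.
exact: lt_nbhsl.
Unshelve. all: by end_near.
Qed.

Lemma ginv_sym a b x t : U x -> 0 < t < T -> ginv g a b x t = ginv g b a x t.
Proof.
move=> Ux Ht; rewrite /ginv.
have E : (gmx g x t)^T = gmx g x t.
  by apply/matrixP => i j; rewrite !mxE (gsym _ _ _ _ Ux Ht).
have := trmx_inv (gmx g x t); rewrite E => /matrixP/(_ b a); rewrite mxE.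
by move=> ->.
Qed.

Lemma gmxE x t i j : gmx g x t i j = g i j x t.
Proof. by rewrite mxE. Qed.

Lemma dx_ginv a b x t k : U x -> 0 < t < T ->
  derivable (fun y => ginv g a b y t) x (evec k).
Proof.
move=> Ux Ht; apply: (@dv_inv _ _ _ (fun y => gmx g y t)).
  move=> i j; have -> : (fun y => gmx g y t i j) = (fun y => g i j y t).
    by apply/funext => y; rewrite gmxE.
  exact: (smooth_dx [::] (gs i j) Ux Ht k).
by move: (near_U Ux); apply: filterS => y Uy; exact: g_unit.
Qed.

Lemma dt_ginv a b x t : U x -> 0 < t < T ->
  derivable (fun s => ginv g a b x s) t 1.
Proof.
move=> Ux Ht; apply: (@dv_inv _ _ _ (fun s => gmx g x s)).
  move=> i j; have -> : (fun s => gmx g x s i j) = (fun s => g i j x s).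
    by apply/funext => y; rewrite gmxE.
  exact: (smooth_dt [::] (gs i j) Ux Ht).
by move: (near_T Ht); apply: filterS => s Hs; exact: g_unit.
Qed.


Lemma dx_gsym a b k y t : U y -> 0 < t < T -> dx (g a b) k y t = dx (g b a) k y t.
Proof.
move=> Uy Ht; rewrite /dx; apply: near_eq_derive.
by move: (near_U Uy); apply: filterS => y' Uy'; exact: gsym.
Qed.

Lemma two_neq0 : (2 : R) != 0.
Proof. by rewrite pnatr_eq0. Qed.

Lemma Dx_ginv a b k y t : U y -> 0 < t < T ->
  dx (ginv g a b) k y t = - (\sum_c ginv g a c y t * Chr g b k c y t)
                          - \sum_c Chr g a k c y t * ginv g c b y t.
Proof.
move=> Uy Ht; rewrite /dx.
have dM : forall i j, derivable (fun y0 => gmx g y0 t i j) y (evec k).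
  move=> i j; have -> : (fun y0 => gmx g y0 t i j) = (fun y0 => g i j y0 t).
    by apply/funext => y0; rewrite gmxE.
  exact: (smooth_dx [::] (gs i j) Uy Ht k).
have uM : \forall y0 \near y, gmx g y0 t \in unitmx.
  by move: (near_U Uy); apply: filterS => y0 Uy0; exact: g_unit.
rewrite (@Dv_inv _ _ _ (fun y0 => gmx g y0 t) y (evec k) dM uM a b).
set Gm := invmx (gmx g y t).
pose Dg := \matrix_(c, d) dx (g c d) k y t.
pose X := \matrix_(l, c) (dx (g l c) k y t + dx (g l k) c y t - dx (g k c) l y t).
pose Gk := \matrix_(l, c) Chr g l k c y t.
have hG : Gk = 2^-1 *: (Gm *m X).
  apply/matrixP => l c; rewrite !mxE /Chr; congr (_ * _).
  by apply: eq_bigr => m _; rewrite !mxE.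
have hD : Dg = 2^-1 *: (X + X^T).
  apply/matrixP => c d; rewrite !mxE.
  rewrite (dx_gsym d c) // (dx_gsym d k) // (dx_gsym c k d) //.
  by field.
have hGs : Gm^T = Gm.
  by apply/matrixP => c d; rewrite mxE /Gm; exact: (ginv_sym d c y t Uy Ht).
have key : Gm *m Dg *m Gm = Gk *m Gm + Gm *m Gk^T.
  have -> : Gk^T = 2^-1 *: (X^T *m Gm) by rewrite hG linearZ /= trmx_mul hGs.
  rewrite hD hG -?scalemxAr -?scalemxAl -?scalemxAr -?scalemxAl -scalerDr.
  by rewrite mulmxDr mulmxDl !mulmxA.
have E : \sum_a0 \sum_b0 Gm a a0 * 'D_(evec k) (fun y0 => gmx g y0 t a0 b0) y * Gm b0 b
   = (Gm *m Dg *m Gm) a b.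
  rewrite mxE exchange_big; apply: eq_bigr => d _; rewrite mxE mulr_suml.
  apply: eq_bigr => c _; rewrite !mxE; congr (_ * _ * _).
  by rewrite /dx; congr ('D_ _ _ _); apply/funext => y0; rewrite gmxE.
rewrite E key !mxE opprD addrC; congr (- _ - _); apply: eq_bigr => c _;
  by rewrite !mxE.
Qed.


Definition nab {m} (A : @tensor R n m) (k : 'I_n) : @tensor R n m :=
  fun J => cov g A (snoc J k).

Lemma nabE {m} (A : @tensor R n m) k J y t : nab A k J y t =
  dx (A J) k y t - \sum_(s < m) \sum_c Chr g c k (J s) y t * A (upd J s c) y t.
Proof. by rewrite /nab /cov init_snoc snoc_max. Qed.

Lemma innBr {m} G (A B1 B2 : {ffun 'I_m -> 'I_n} -> R) :
  inn G A (fun L => B1 L - B2 L) = inn G A B1 - inn G A B2.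
Proof. by rewrite inn_swap innBl (inn_swap G A B1) (inn_swap G A B2). Qed.

Lemma inner_deriv {m} (A B : @tensor R n m) k y t : U y -> 0 < t < T ->
  (forall J, derivable (fun y' => A J y' t) y (evec k)) ->
  (forall L, derivable (fun y' => B L y' t) y (evec k)) ->
  derivable (fun y' => inner g A B y' t) y (evec k) /\
  dx (inner g A B) k y t = inner g (nab A k) B y t + inner g A (nab B k) y t.
Proof.
move=> Uy Ht dA dB.
have dG : forall a b, derivable (fun y' => ginv g a b y' t) y (evec k).
  by move=> a b; exact: dx_ginv.
have [D1 D2] := @D_inner _ _ _ _ (fun a b y' => ginv g a b y' t)
  (fun J y' => A J y' t) (fun L y' => B L y' t) y (evec k) dG dA dB.
split; first exact: D1.
transitivity (MT (fun a b => ginv g a b y t)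
    (fun a b => 'D_(evec k) (fun y' => ginv g a b y' t) y)
    (fun J => A J y t) (fun L => B L y t)
  + inn (fun a b => ginv g a b y t) (fun J => 'D_(evec k) (fun y' => A J y' t) y)
        (fun L => B L y t)
  + inn (fun a b => ginv g a b y t) (fun J => A J y t)
        (fun L => 'D_(evec k) (fun y' => B L y' t) y)); first exact: D2.
have -> : inner g (nab A k) B y t = inn (fun a b => ginv g a b y t)
   (fun J => dx (A J) k y t - \sum_(s < m) \sum_c Chr g c k (J s) y t * A (upd J s c) y t)
   (fun L => B L y t).
  by apply: inn_ext => // J; rewrite nabE.
have -> : inner g A (nab B k) y t = inn (fun a b => ginv g a b y t)
   (fun J => A J y t)
   (fun L => dx (B L) k y t - \sum_(s < m) \sum_c Chr g c k (L s) y t * B (upd L s c) y t).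
  by apply: inn_ext => // L; rewrite nabE.
rewrite innBl innBr.
rewrite (contract_l (fun a b => ginv g a b y t) (fun a c => Chr g c k a y t)
   (fun J => A J y t) (fun L => B L y t)).
rewrite (contract_r (fun a b => ginv g a b y t) (fun a c => Chr g c k a y t)
   (fun J => A J y t) (fun L => B L y t)).
rewrite (@MT_lin _ _ _ _ _ (fun a b => \sum_c ginv g c b y t * Chr g a k c y t)
   (fun a b => \sum_c ginv g a c y t * Chr g b k c y t) (-1) (-1)); last first.
  move=> a b; rewrite -/(dx (ginv g a b) k y t) Dx_ginv //.
  rewrite addrC !mulN1r; congr (- _ - _); apply: eq_bigr => c _; exact: mulrC.
rewrite /dx; ring.
Qed.


Lemma covF0 (f : stfun) (K : {ffun 'I_1 -> 'I_n}) :
  cov g ((fun _ => f) : @tensor R n 0) K = dx f (K ord_max).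
Proof. by apply/funext => y; apply/funext => s; rewrite /cov big_ord0 subr0. Qed.

Lemma lapE (f : stfun) x t : lap_fun g f x t =
  \sum_i \sum_j ginv g i j x t *
     (dx (dx f i) j x t - \sum_a Chr g a j i x t * dx f a x t).
Proof.
rewrite /lap_fun; apply: eq_bigr => i _; apply: eq_bigr => j _; congr (_ * _).
rewrite {1}/cov init_snoc snoc_max !covF0.
rewrite snoc_max big_ord1; congr (_ - _); apply: eq_bigr => a _.
have -> : (ord0 : 'I_1) = ord_max by apply/val_inj.
by rewrite snoc_max upd_snoc_max covF0 snoc_max.
Qed.

Lemma widen_lift {m} (s : 'I_m) : widen_ord (leqnSn m) s = lift ord_max s.
Proof.
apply/val_inj => /=; rewrite /bump; have -> : (m <= s)%N = false.
  by apply/negbTE; rewrite -ltnNge.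
by [].
Qed.

Lemma upd_snoc_widen {m} (J : {ffun 'I_m -> 'I_n}) j s a :
  upd (snoc J j) (widen_ord (leqnSn m) s) a = snoc (upd J s a) j.
Proof. by rewrite widen_lift upd_snoc_lift. Qed.

Lemma dChr l a b x t k : U x -> 0 < t < T ->
  derivable (fun y => Chr g l a b y t) x (evec k).
Proof.
move=> Ux Ht; rewrite /Chr; apply: dvM; first exact: dvC.
apply: (dv_sumd _ _ _ (fun m y => ginv g l m y t *
   (dx (g m b) a y t + dx (g m a) b y t - dx (g a b) m y t))) => m _.
apply: dvM; first exact: dx_ginv.
apply: dvB; first apply: dvD.
- exact: (smooth_dx [:: PDx a] (gs m b) Ux Ht k).
- exact: (smooth_dx [:: PDx b] (gs m a) Ux Ht k).
- exact: (smooth_dx [:: PDx m] (gs a b) Ux Ht k).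
Qed.

Lemma innerE {m} (A B : @tensor R n m) y t :
  inner g A B y t = inn (fun a b => ginv g a b y t) (fun J => A J y t) (fun L => B L y t).
Proof. by []. Qed.

Lemma innerC {m} (A B : @tensor R n m) y t : U y -> 0 < t < T ->
  inner g A B y t = inner g B A y t.
Proof. by move=> Uy Ht; rewrite !innerE innC // => a b; exact: ginv_sym. Qed.

Section Xi.
Variables (p : nat) (xi : @tensor R n p).
Hypothesis xs : forall I, smooth_on U T (xi I).

Lemma nabnab i j I y t : nab (nab xi i) j I y t =
  cov g (cov g xi) (snoc (snoc I i) j) y t + \sum_a Chr g a j i y t * nab xi a I y t.
Proof.
rewrite /nab {1}/cov init_snoc snoc_max.
rewrite [cov g (cov g xi) _]/cov init_snoc snoc_max big_ord_recr /=.
have E1 : \sum_a Chr g a j (snoc I i ord_max) y t *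
      cov g xi (upd (snoc I i) ord_max a) y t =
    \sum_a Chr g a j i y t * cov g xi (snoc I a) y t.
  by apply: eq_bigr => a _; rewrite snoc_max upd_snoc_max.
have E2 : \sum_(i0 < p) \sum_a
      Chr g a j (snoc I i (widen_ord (leqnSn p) i0)) y t *
      cov g xi (upd (snoc I i) (widen_ord (leqnSn p) i0) a) y t =
    \sum_(s < p) \sum_a Chr g a j (I s) y t * cov g xi (snoc (upd I s a) i) y t.
  apply: eq_bigr => s _; apply: eq_bigr => a _.
  by rewrite snoc_widen upd_snoc_widen.
rewrite E1 E2 /nab; ring.
Qed.


Lemma dnab i J x t k : U x -> 0 < t < T ->
  derivable (fun y => nab xi i J y t) x (evec k).
Proof.
move=> Ux Ht.
have -> : (fun y => nab xi i J y t) = (fun y => dx (xi J) i y t -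
    \sum_(s < p) \sum_c Chr g c i (J s) y t * xi (upd J s c) y t).
  by apply/funext => y; rewrite nabE.
apply: dvB; first exact: (smooth_dx [:: PDx i] (xs J) Ux Ht k).
apply: (dv_sumd _ _ _ (fun s y => \sum_c Chr g c i (J s) y t * xi (upd J s c) y t)) => s _.
apply: (dv_sumd _ _ _ (fun c y => Chr g c i (J s) y t * xi (upd J s c) y t)) => c _.
apply: dvM; first exact: dChr.
exact: (smooth_dx [::] (xs _) Ux Ht k).
Qed.

Lemma dxi J x t k : U x -> 0 < t < T -> derivable (fun y => xi J y t) x (evec k).
Proof. by move=> Ux Ht; exact: (smooth_dx [::] (xs J) Ux Ht k). Qed.

Lemma dN a y t : U y -> 0 < t < T ->
  dx (norm2 g xi) a y t = inner g (nab xi a) xi y t + inner g xi (nab xi a) y t.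
Proof.
move=> Uy Ht.
by have [_ ->] := @inner_deriv p xi xi a y t Uy Ht
  (fun J => dxi J y t a Uy Ht) (fun J => dxi J y t a Uy Ht).
Qed.

Definition cc i j : @tensor R n p := fun I => cov g (cov g xi) (snoc (snoc I i) j).

Lemma Tij i j x t : U x -> 0 < t < T ->
  dx (dx (norm2 g xi) i) j x t - \sum_a Chr g a j i x t * dx (norm2 g xi) a x t =
  2 * inner g (cc i j) xi x t + 2 * inner g (nab xi i) (nab xi j) x t.
Proof.
move=> Ux Ht.
have [dA1 EA1] := @inner_deriv p (nab xi i) xi j x t Ux Ht
  (fun J => dnab i J x t j Ux Ht) (fun J => dxi J x t j Ux Ht).
have [dA2 EA2] := @inner_deriv p xi (nab xi i) j x t Ux Ht
  (fun J => dxi J x t j Ux Ht) (fun J => dnab i J x t j Ux Ht).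
have DD : dx (dx (norm2 g xi) i) j x t =
    dx (inner g (nab xi i) xi) j x t + dx (inner g xi (nab xi i)) j x t.
  rewrite {1}/dx (@near_eq_derive _ _ _ _
     (fun y => inner g (nab xi i) xi y t + inner g xi (nab xi i) y t)).
    by rewrite /dx; apply: DvD; [exact: dA1|exact: dA2].
  by move: (near_U Ux); apply: filterS => y Uy; exact: dN.
rewrite DD EA1 EA2.
have NN : inner g (nab (nab xi i) j) xi x t = inner g (cc i j) xi x t +
    \sum_a Chr g a j i x t * inner g (nab xi a) xi x t.
  have -> : inner g (nab (nab xi i) j) xi x t = inn (fun a b => ginv g a b x t)
     (fun I => cc i j I x t + \sum_a Chr g a j i x t * nab xi a I x t)
     (fun L => xi L x t).
    by apply: inn_ext => // I; exact: nabnab.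
  rewrite innDl inn_sumA; congr (_ + _); apply: eq_bigr => a _.
  by rewrite innZl.
rewrite (innerC xi (nab (nab xi i) j)) // NN (innerC (nab xi j)) //.
have S : \sum_a Chr g a j i x t * dx (norm2 g xi) a x t =
    2 * \sum_a Chr g a j i x t * inner g (nab xi a) xi x t.
  rewrite mulr_sumr; apply: eq_bigr => a _.
  by rewrite dN // (innerC xi (nab xi a)) //; ring.
rewrite S; ring.
Qed.

Definition H1 : @tensor R n p := fun I y s =>
  \sum_j \sum_k ginv g j k y s * cov g (cov g xi) (snoc (snoc I j) k) y s.

Lemma space x t : U x -> 0 < t < T ->
  lap_fun g (norm2 g xi) x t =
  2 * inner g H1 xi x t + 2 * inner g (cov g xi) (cov g xi) x t.
Proof.
move=> Ux Ht; rewrite lapE.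
transitivity (\sum_i \sum_j ginv g i j x t *
   (2 * inner g (cc i j) xi x t + 2 * inner g (nab xi i) (nab xi j) x t)).
  by apply: eq_bigr => i _; apply: eq_bigr => j _; rewrite Tij.
have -> : inner g H1 xi x t =
    \sum_i \sum_j ginv g i j x t * inner g (cc i j) xi x t.
  rewrite innerE inn_sumA; apply: eq_bigr => i _.
  by rewrite inn_sumA; apply: eq_bigr => j _; rewrite innZl.
have -> : inner g (cov g xi) (cov g xi) x t =
    \sum_i \sum_j ginv g i j x t * inner g (nab xi i) (nab xi j) x t.
  by rewrite innerE inn_split.
rewrite !mulr_sumr -big_split; apply: eq_bigr => i _.
rewrite !mulr_sumr -big_split; apply: eq_bigr => j _ /=; ring.
Qed.

Hypothesis rf : forall i j x t, U x -> 0 < t < T -> dt (g i j) x t = - 2 * Ric g i j x t.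
Hypothesis heat : forall I x t, U x -> 0 < t < T -> dt (xi I) x t = hodge_lap g xi I x t.

Lemma Dt_ginv a b x t : U x -> 0 < t < T ->
  dt (ginv g a b) x t = 2 * \sum_c \sum_d ginv g a c x t * Ric g c d x t * ginv g d b x t.
Proof.
move=> Ux Ht; rewrite /dt.
have dM : forall i j, derivable (fun s => gmx g x s i j) t 1.
  move=> i j; have -> : (fun s => gmx g x s i j) = (fun s => g i j x s).
    by apply/funext => s; rewrite gmxE.
  exact: (smooth_dt [::] (gs i j) Ux Ht).
have uM : \forall s \near t, gmx g x s \in unitmx.
  by move: (near_T Ht); apply: filterS => s Hs; exact: g_unit.
rewrite (@Dv_inv _ _ _ (fun s => gmx g x s) t 1 dM uM a b).
rewrite mulr_sumr -sumrN; apply: eq_bigr => c _.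
rewrite mulr_sumr -sumrN; apply: eq_bigr => d _.
have -> : (fun s => gmx g x s c d) = (fun s => g c d x s).
  by apply/funext => s; rewrite gmxE.
rewrite -/(dt (g c d) x t) rf // /ginv; ring.
Qed.

Definition H2 : @tensor R n p := fun I y s =>
  \sum_(s0 < p) \sum_a xi (upd I s0 a) y s * Ric_up g a (I s0) y s.
Definition H3 : @tensor R n p := fun I y s =>
  \sum_(s0 < p) \sum_(u < p | (s0 < u)%N) \sum_a \sum_b
     xi (upd (upd I s0 a) u b) y s * Riem_up g a b (I s0) (I u) y s.

Lemma time_eq x t : U x -> 0 < t < T ->
  dt (norm2 g xi) x t = 2 * inner g H1 xi x t - 2 * inner g H3 xi x t.
Proof.
move=> Ux Ht.
have dG : forall a b, derivable (fun s => ginv g a b x s) t 1.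
  by move=> a b; exact: dt_ginv.
have dA : forall J, derivable (fun s => xi J x s) t 1.
  by move=> J; exact: (smooth_dt [::] (xs J) Ux Ht).
have [_ D2] := @D_inner _ _ _ _ (fun a b s => ginv g a b x s)
  (fun J s => xi J x s) (fun L s => xi L x s) t 1 dG dA dA.
set G := fun a b => ginv g a b x t.
set X := fun J => xi J x t.
transitivity (MT G (fun a b => 'D_1 (fun s => ginv g a b x s) t) X X
  + inn G (fun J => 'D_1 (fun s => xi J x s) t) X
  + inn G X (fun L => 'D_1 (fun s => xi L x s) t)); first exact: D2.
have hod : forall J, 'D_1 (fun s => xi J x s) t =
    H1 J x t - H2 J x t - H3 J x t.
  by move=> J; rewrite -/(dt (xi J) x t) heat.
rewrite (@inn_ext _ _ _ G _ _ _ _ hod (fun L => erefl)) (@inn_ext _ _ _ G _ _ _ _ (fun L => erefl) hod).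
rewrite [inn G X _]innC; last by move=> a b; exact: ginv_sym.
rewrite !innBl.
have EH2 : inn G (fun J => H2 J x t) X =
    MT G (fun a b => \sum_c G c b * Ric_up g a c x t) X X.
  rewrite -(contract_l G (fun a c => Ric_up g c a x t)).
  apply: inn_ext => // J; apply: eq_bigr => s _; apply: eq_bigr => c _.
  exact: mulrC.
rewrite EH2.
rewrite (@MT_lin _ _ _ _ _ (fun a b => \sum_c G c b * Ric_up g a c x t)
   (fun a b => \sum_c G c b * Ric_up g a c x t) 2 0); last first.
  move=> a b; rewrite -/(dt (ginv g a b) x t) Dt_ginv // mul0r addr0.
  congr (_ * _); rewrite /Ric_up.
  under [RHS]eq_bigr => c _ do rewrite mulr_sumr.
  rewrite [RHS]exchange_big; apply: eq_bigr => c _; apply: eq_bigr => d _.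
  by rewrite /G; ring.
rewrite !innerE -/G -/X; ring.
Qed.

Lemma H3_Tsu x t : inner g H3 xi x t =
  \sum_(s < p) \sum_(u < p | (s < u)%N)
    Tsu (fun a b => ginv g a b x t) (fun a b c d => Riem_up g a b c d x t)
        (fun J => xi J x t) s u.
Proof.
rewrite innerE inn_sumA; apply: eq_bigr => s _.
rewrite inn_sumA; apply: eq_bigr => u su; apply: pair_term.
by rewrite -[s == u]/(val s == val u) ltn_eqF.
Qed.

Lemma main_xi x t : U x -> 0 < t < T ->
  dt (norm2 g xi) x t = lap_fun g (norm2 g xi) x t
    - 2 * inner g (cov g xi) (cov g xi) x t
    - 2 * \sum_(s < p) \sum_(u < p | (s < u)%N)
    Tsu (fun a b => ginv g a b x t) (fun a b c d => Riem_up g a b c d x t)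
        (fun J => xi J x t) s u.
Proof.
move=> Ux Ht; rewrite time_eq // space // H3_Tsu; ring.
Qed.

End Xi.

End Geo.

Lemma H3_curv {R : realType} {n : nat} (g : @metric R n) (p : nat)
  (xi : @tensor R n p) x t : antisym xi ->
  2 * \sum_(s < p) \sum_(u < p | (s < u)%N)
    Tsu (fun a b => ginv g a b x t) (fun a b c d => Riem_up g a b c d x t)
        (fun J => xi J x t) s u = (p * (p - 1))%:R * curv_term g xi x t.
Proof.
case: p xi => [|[|q]] xi anti.
- by rewrite big_ord0 mulr0 mul0r.
- rewrite big_ord1 big1 ?mulr0 ?mul0r // => u.
  by rewrite (ord1 u).
- have E : forall s u : 'I_q.+2, (s < u)%N ->
      Tsu (fun a b => ginv g a b x t) (fun a b c d => Riem_up g a b c d x t)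
        (fun J => xi J x t) s u =
      Tsu (fun a b => ginv g a b x t) (fun a b c d => Riem_up g a b c d x t)
        (fun J => xi J x t) ord0 (lift ord0 ord0).
    move=> s u su; apply: Tsu_01.
      by move=> J a b ab; exact: (anti J a b ab x t).
    by rewrite -[s == u]/(val s == val u) ltn_eqF.
  transitivity (2 * (\sum_(s < q.+2) \sum_(u < q.+2 | (s < u)%N) (1:R)) *
    Tsu (fun a b => ginv g a b x t) (fun a b c d => Riem_up g a b c d x t)
        (fun J => xi J x t) ord0 (lift ord0 ord0)).
    rewrite -mulrA mulr_suml; congr (_ * _); apply: eq_bigr => s _.
    by rewrite mulr_suml; apply: eq_bigr => u su; rewrite E // mul1r.
  rewrite pairs_count; congr (_ * _).
  rewrite /Tsu /curv_term /=; apply: eq_bigr => J _; apply: eq_bigr => L _.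
  apply: eq_bigr => c _; apply: eq_bigr => d _; rewrite prod_curv; ring.
Qed.

Theorem lemma1 (R : realType) (n p : nat) (U : set 'rV[R]_n) (T : R)
  (g : @metric R n) (xi : @tensor R n p) :
  open U ->
  (forall i j, smooth_on U T (g i j)) ->
  (forall i j x t, U x -> 0 < t < T -> g i j x t = g j i x t) ->
  (forall x t, U x -> 0 < t < T ->
     forall v : 'rV[R]_n, v != 0 -> 0 < (v *m gmx g x t *m v^T) 0 0) ->
  (forall i j x t, U x -> 0 < t < T -> dt (g i j) x t = - 2 * Ric g i j x t) ->
  (forall I, smooth_on U T (xi I)) ->
  antisym xi ->
  (forall I x t, U x -> 0 < t < T -> dt (xi I) x t = hodge_lap g xi I x t) ->
  forall x t, U x -> 0 < t < T ->
    dt (norm2 g xi) x t =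
      lap_fun g (norm2 g xi) x t
      - 2 * inner g (cov g xi) (cov g xi) x t
      - (p * (p - 1))%:R * curv_term g xi x t.
Proof.
move=> oU gs gsym gpos rf xs anti heat x t Ux Ht.
rewrite (@main_xi _ _ _ _ _ oU gs gsym gpos _ _ xs rf heat _ _ Ux Ht) -(@H3_curv _ _ g p xi x t anti).
by [].
Qed.
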